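(* Let $p=4k+1$ be a prime, let $J(k)=\sum_{i=1}^{4k-2}\big(\frac{i(i+1)(i+2)}{p}\big)$ and $d(k)=\frac{J(k)^2-4}{32}$, and let $S\subset\mathbb{P}^5$ be the surface over $\mathbb{F}_p$ defined by $x_1^2-x_2^2=x_3^2$, $x_0^2-x_1^2=x_4^2$, $x_0^2-x_2^2=x_5^2$. Then $$n_p(K_4)=\frac{k(k-1)(k-4)+2k\,d(k)}{24}\quad\text{if and only if}\quad |S(\mathbb{F}_p)|=(p+1)^2+J(k)^2 .$$
   Context: $\big(\frac{a}{p}\big)$ is the Legendre symbol. $n_p(K_4)$ is the number of $4$-tuples $(r_1,r_2,r_3,r_4)$ of pairwise distinct residues modulo $p$ such that all differences $r_i-r_j$ ($i\neq j$) are nonzero quadratic residues mod $p$, where tuples differing by a permutation of entries or by adding the same residue to all entries are identified. *)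

(* Defs.v *)
From HB Require Import structures.
From mathcomp Require Import all_boot all_order all_algebra.
Set Implicit Arguments. Unset Strict Implicit. Unset Printing Implicit Defensive.
Import Order.TTheory GRing.Theory Num.Theory.
Local Open Scope ring_scope.

Definition legendre (p a : nat) : int :=
  if (p %| a)%N then 0
  else if [exists y : 'I_p, ((y * y) %% p == a %% p)%N] then 1 else -1.

Definition Jk (k : nat) : int :=
  \sum_(1 <= i < (4 * k - 2).+1) legendre (4 * k + 1) (i * (i + 1) * (i + 2)).

Definition dk (k : nat) : rat := ((Jk k)%:~R ^+ 2 - 4) / 32.

Definition nzqr (p : nat) (x : 'F_p) : bool := (x != 0) && [exists y : 'F_p, y * y == x].

Definition goodK4 (p : nat) : {set {set 'F_p}} :=
  [set A : {set 'F_p} | (#|A| == 4)%N &&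
     [forall x in A, forall y in A, (x != y) ==> nzqr (x - y)]].

Definition npK4 (p : nat) : nat :=
  #|[set [set [set a + t | a in A] | t : 'F_p] | A : {set 'F_p} in goodK4 p]|.

Definition Seq (p : nat) (x : {ffun 'I_6 -> 'F_p}) : bool :=
  [&& x (inord 1) ^+ 2 - x (inord 2) ^+ 2 == x (inord 3) ^+ 2,
      x (inord 0) ^+ 2 - x (inord 1) ^+ 2 == x (inord 4) ^+ 2 &
      x (inord 0) ^+ 2 - x (inord 2) ^+ 2 == x (inord 5) ^+ 2].

Definition vscale (p : nat) (c : 'F_p) (x : {ffun 'I_6 -> 'F_p}) : {ffun 'I_6 -> 'F_p} :=
  [ffun i => c * x i].

Definition Spoints (p : nat) : {set {set {ffun 'I_6 -> 'F_p}}} :=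
  [set [set vscale c x | c in [set c : 'F_p | c != 0]]
     | x in [set x : {ffun 'I_6 -> 'F_p} | (x != [ffun => 0]) && Seq x]].

(* Main.v *)
Require Import Defs.
From mathcomp Require Import all_boot all_order all_algebra ring zify.
Import Order.TTheory GRing.Theory Num.Theory.
Local Open Scope ring_scope.
Set Implicit Arguments. Unset Strict Implicit. Unset Printing Implicit Defensive.

Lemma orbit_count (T : finType) (X : {set T}) (O : T -> {set T}) (m : nat) :
  (forall x, x \in X -> O x \subset X) ->
  (forall x, x \in X -> #|O x| = m) ->
  (forall x y, x \in X -> y \in O x -> O y = O x) ->
  (forall x, x \in X -> x \in O x) ->
  (#|[set O x | x in X]| * m = #|X|)%N.
Proof.
move=> hsub hcard hcl hin.
rewrite -[#|X|]sum1_card (partition_big_imset O) /= -sum_nat_const.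
apply: eq_bigr => B /imsetP [x0 hx0 ->].
rewrite sum1_card -(hcard _ hx0); apply: eq_card => y /=.
rewrite unfold_in /=.
apply/idP/andP => [hy|[hy /eqP <-]]; last exact: hin.
have hyX : y \in X by apply: (subsetP (hsub _ hx0)).
by split => //; rewrite (hcl x0 y).
Qed.

Section Main.
Variables p k : nat.
Hypothesis hp : prime p.
Hypothesis hpk : p = (4 * k + 1)%N.
Local Notation F := ('F_p).

Lemma k_gt0 : (0 < k)%N.
Proof. by move: hp; rewrite hpk; case: k. Qed.

Lemma cardF : #|F| = p.
Proof. exact: card_Fp. Qed.

Lemma natF_neq0 n : (0 < n < p)%N -> (n%:R : F) != 0.
Proof.
move=> /andP [h0 h1]; apply/negP => /eqP h.
have := val_Fp_nat hp n; rewrite h modn_small //=.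
lia.
Qed.

Lemma two_neq0 : (2 : F) != 0.
Proof. apply: natF_neq0; have := k_gt0; lia. Qed.

Lemma four_neq0 : (4 : F) != 0.
Proof. apply: natF_neq0; have := k_gt0; lia. Qed.

Lemma p0 : (p%:R : F) = 0.
Proof. exact: pchar_Fp_0. Qed.

Lemma sqrtm1 : exists i : F, i * i = -1.
Proof.
have hW : (((4 * k)`!)%:R : F) = -1.
  have := hp; rewrite Wilson; last by have := k_gt0; lia.
  have e : p.-1 = (4 * k)%N by rewrite hpk addn1.
  rewrite e => hd.
  have : ((((4 * k)`!).+1)%:R : F) = 0.
    by rewrite -Fp_nat_mod // (eqP hd).
  by rewrite mulrSr => /eqP; rewrite addr_eq0 => /eqP.
have hfact n : ((n`!)%:R : F) = \prod_(i < n) (i.+1)%:R.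
  by rewrite fact_prod natr_prod big_add1 big_mkord.
exists ((2 * k)`!)%:R.
rewrite -hW.
have -> : ((4 * k)`! = (2 * k + 2 * k)`!)%N by congr (_`!); lia.
rewrite [RHS]hfact big_split_ord /= -hfact; congr (_ * _).
rewrite (reindex_inj rev_ord_inj) /=.
have -> : \prod_(j < 2 * k) ((2 * k + (2 * k - j.+1)).+1)%:R
          = \prod_(j < 2 * k) (- (j.+1)%:R : F).
  apply: eq_bigr => j _.
  apply/eqP; rewrite -addr_eq0 -natrD.
  have -> : ((2 * k + (2 * k - j.+1)).+1 + j.+1 = p)%N by have := ltn_ord j; lia.
  by rewrite p0.
rewrite prodrN card_ord.
have -> : ((-1 : F) ^+ (2 * k) = 1) by rewrite exprM sqrrN expr1n expr1n.
by rewrite mul1r.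
Qed.

Lemma sum_eq1 (T : finType) (a : T) : (\sum_(z : T) (z == a : nat) = 1)%N.
Proof. by rewrite (bigD1 a) //= eqxx big1 // => z /negbTE ->. Qed.

Definition Q (x : F) : nat := (\sum_(y : F) nat_of_bool (y * y == x)%R)%N.
Definition QR (x : F) : bool := Q x == 2%N.

Lemma Q0 : Q 0 = 1%N.
Proof.
rewrite /Q -[RHS](sum_eq1 (0 : F)); apply: eq_bigr => y _.
by rewrite mulf_eq0 orbb.
Qed.

Lemma QR0 : QR 0 = false.
Proof. by rewrite /QR Q0. Qed.

Lemma QRnz x : QR x -> x != 0.
Proof. by apply: contraTneq => ->; rewrite QR0. Qed.

Lemma y_neq_negy (y : F) : y != 0 -> y != - y.
Proof.
move=> hy; apply/eqP => h.
have : y * 2 = 0 by rewrite mulr_natr mulr2n {1}h addNr.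
by move/eqP; rewrite mulf_eq0 (negbTE hy) (negbTE two_neq0).
Qed.

Lemma Q_exists x : x != 0 -> [exists y, y * y == x] -> Q x = 2%N.
Proof.
move=> hx /existsP [y /eqP hy].
have hy0 : y != 0 by apply: contra_eq_neq hy => ->; rewrite mul0r eq_sym.
have hyn := y_neq_negy hy0.
have -> : Q x = (\sum_(z : F) ((z == y) + (z == - y)%R))%N.
  apply: eq_bigr => z _; rewrite -hy -!expr2 eqf_sqr.
  case: (z =P y) => [->|] /=; first by rewrite (negbTE hyn).
  by case: (z == - y).
by rewrite big_split /= !sum_eq1.
Qed.

Lemma Q_nexists x : ~~ [exists y, y * y == x] -> Q x = 0%N.
Proof.
move=> hn; apply: big1 => y _; apply/eqP; rewrite eqb0.
by apply: contra hn => h; apply/existsP; exists y.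
Qed.

Lemma Qnz x : x != 0 -> Q x = (2 * QR x)%N.
Proof.
move=> hx; case: (boolP [exists y, y * y == x]) => h.
  by rewrite /QR Q_exists.
by rewrite /QR Q_nexists.
Qed.

Lemma nzqrE x : nzqr x = QR x.
Proof.
rewrite /nzqr; case: (x =P 0) => [->|/eqP hx] /=; first by rewrite QR0.
case: (boolP [exists y, y * y == x]) => h.
  by rewrite /QR Q_exists.
by rewrite /QR Q_nexists.
Qed.

Lemma Qneg x : Q (- x) = Q x.
Proof.
have [i hi] := sqrtm1.
have inz : i != 0 by apply: contra_eq_neq hi => ->; rewrite mul0r eq_sym oppr_eq0 oner_eq0.
rewrite /Q (reindex_inj (mulfI inz)); apply: eq_bigr => y _.
have -> : i * y * (i * y) = - (y * y) by rewrite mulrACA hi mulN1r.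
by rewrite eqr_opp.
Qed.

Lemma QRneg x : QR (- x) = QR x.
Proof. by rewrite /QR Qneg. Qed.

Lemma Qsub x y : Q (x - y) = Q (y - x).
Proof. by rewrite -Qneg opprB. Qed.

Lemma QRsub x y : QR (x - y) = QR (y - x).
Proof. by rewrite /QR Qsub. Qed.

Lemma sqsub (g : F -> nat) : (\sum_(y : F) g (y * y)%R = \sum_(u : F) Q u * g u)%N.
Proof.
rewrite /Q; under [RHS]eq_bigr => u _ do rewrite big_distrl /=.
rewrite exchange_big /=; apply: eq_bigr => y _.
rewrite (bigD1 (y * y)) //= eqxx mul1n big1 ?addn0 // => u.
by rewrite eq_sym => /negbTE ->.
Qed.

Lemma Qsum : (\sum_(u : F) Q u = p)%N.
Proof.
have h := sqsub (fun _ => 1%N); rewrite sum1_card cardF in h; rewrite [RHS]h.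
by apply: eq_bigr => u _; rewrite muln1.
Qed.

Lemma QRsum : (\sum_(u : F) (QR u : nat) = 2 * k)%N.
Proof.
have h := Qsum; rewrite (bigD1 0) //= Q0 in h.
have e : (\sum_(u | (u != 0)%R) Q u = 2 * \sum_(u | (u != 0)%R) (QR u : nat))%N.
  by rewrite big_distrr; apply: eq_bigr => u hu; exact: Qnz.
have e2 : (\sum_u (QR u : nat) = \sum_(u | (u != 0)%R) (QR u : nat))%N.
  by rewrite (bigD1 0) //= QR0.
rewrite e in h. rewrite e2. lia.
Qed.

Lemma hyper v : v != 0 -> (\sum_(u : F) Q u * Q (u - v)%R = 4 * k)%N.
Proof.
move=> hv.
rewrite -(sqsub (fun u => Q (u - v))) /Q.
have e1 : forall y : F, (\sum_(z : F) nat_of_bool (z * z == y * y - v)%R =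
                         \sum_(z : F) nat_of_bool (y * y - z * z == v)%R)%N.
  move=> y; apply: eq_bigr => z _; congr (nat_of_bool _).
  by apply/eqP/eqP => [->|<-]; ring.
under eq_bigr => y _ do rewrite e1.
rewrite pair_bigA /=.
pose h := fun st : F * F => ((st.1 + st.2) / 2, (st.2 - st.1) / 2).
pose g := fun yz : F * F => (yz.1 - yz.2, yz.1 + yz.2).
have hK : cancel h g.
  case=> s t; rewrite /g /h /=; congr pair; field; exact: two_neq0.
rewrite (reindex_inj (can_inj hK)) /=.
have e2 : forall st : F * F,
   (((st.1 + st.2) / 2) * ((st.1 + st.2) / 2) - ((st.2 - st.1) / 2) * ((st.2 - st.1) / 2)
     == v) = (st.1 * st.2 == v).
  move=> [s t] /=; congr (_ == _); field; exact: two_neq0.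
under eq_bigr => st _ do rewrite e2.
rewrite -(pair_bigA _ (fun s t => (s * t == v : nat))) /=.
rewrite (bigD1 0) //= big1 ?add0n; last by move=> t _; rewrite mul0r eq_sym (negbTE hv).
rewrite (eq_bigr (fun _ => 1%N)); last first.
  move=> s hs; rewrite -[RHS](sum_eq1 (s^-1 * v)); apply: eq_bigr => t _.
  congr nat_of_bool; apply/eqP/eqP => [<-|->]; first by rewrite mulKf.
  by rewrite mulVKf.
rewrite sum1_card cardC1 cardF; lia.
Qed.


Lemma QQ x : x != 0 -> (Q x * Q x = 2 * Q x)%N.
Proof. by move=> hx; rewrite Qnz //; case: (QR x). Qed.

Definition M (v : F) : nat := (\sum_(u : F) Q u * Q u * Q (v - u)%R)%N.

Lemma QRQ x : QR x -> Q x = 2%N.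
Proof. by move/eqP. Qed.

Lemma M_val v : QR v -> M v = (8 * k - 2)%N.
Proof.
move=> hv; have hv0 := QRnz hv.
have h := hyper hv0; rewrite (bigD1 0) //= Q0 sub0r Qneg (QRQ hv) in h.
have hs : (\sum_(u | (u != 0)%R) Q u * Q (u - v)%R = 4 * k - 2)%N.
  by move: h; rewrite mul1n => <-; rewrite addKn.
rewrite /M (bigD1 0) //= Q0 subr0 (QRQ hv).
have e : (\sum_(u | (u != 0)%R) Q u * Q u * Q (v - u)%R
          = 2 * \sum_(u | (u != 0)%R) Q u * Q (u - v)%R)%N.
  by rewrite big_distrr; apply: eq_bigr => u hu; rewrite QQ // Qsub /= mulnA.
rewrite e hs; have := k_gt0; lia.
Qed.

Definition c3 (v : F) : nat := (\sum_(b : F) (QR b && QR (b - v)%R : nat))%N.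

Lemma c3_val v : QR v -> c3 v = (k - 1)%N.
Proof.
move=> hv; have hv0 := QRnz hv.
have h := hyper hv0.
rewrite (bigD1 0) //= (bigD1 v) //= Q0 sub0r Qneg subrr Q0 (QRQ hv) in h.
have e : (\sum_(i | (i != 0)%R && (i != v)) Q i * Q (i - v)%R
          = 4 * \sum_(i | (i != 0)%R && (i != v)) (QR i && QR (i - v)%R : nat))%N.
  rewrite big_distrr; apply: eq_bigr => u /andP [hu huv].
  rewrite !Qnz // ?subr_eq0 //.
  by case: (QR u); case: (QR (u - v)).
rewrite e in h.
have hs : (\sum_(i | (i != 0)%R && (i != v)) (QR i && QR (i - v)%R : nat) = k - 1)%N.
  by move: h; rewrite mul1n muln1; lia.
rewrite /c3 (bigD1 0) //= (bigD1 v) //= QR0 subrr QR0 andbF hs.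
by [].
Qed.

Definition K3 (u0 u1 u2 : F) : bool :=
  [&& QR u0, QR u1, QR u2, QR (u0 - u1), QR (u0 - u2) & QR (u1 - u2)].

Definition L2 (u0 u1 : F) : nat :=
  (\sum_(u2 : F) Q u2 * Q (u1 - u2)%R * Q (u0 - u2)%R)%N.

Definition D (u0 u1 : F) : nat :=
  if u0 == 0 then (if u1 == 0 then (16 * k + 1)%N else (4 * (8 * k - 2) * QR u1)%N)
  else if u1 == 0 then (4 * (8 * k - 2) * QR u0)%N
  else if u0 == u1 then (4 * (8 * k - 2) * QR u0)%N
  else (96 * (QR u0 && QR u1 && QR (u0 - u1)%R))%N.

Lemma pre_L2 u0 u1 :
  (Q u0 * Q u1 * Q (u0 - u1)%R * L2 u0 u1
   = 64 * \sum_(u2 : F) (K3 u0 u1 u2 : nat) + D u0 u1)%N.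
Proof.
rewrite /D /L2.
case: (u0 =P 0) => [->|/eqP h0].
  rewrite (_ : (\sum_(u2 : F) (K3 0%R u1 u2 : nat) = 0)%N) ?muln0 ?add0n; last first.
    by apply: big1 => u2 _; rewrite /K3 QR0.
  case: (u1 =P 0) => [->|/eqP h1].
    rewrite subrr Q0 !mul1n (bigD1 0) //= Q0 subrr Q0.
    have e : (\sum_(i | (i != 0)%R) Q i * Q (0 - i)%R * Q (0 - i)%R
              = 8 * \sum_(i | (i != 0)%R) (QR i : nat))%N.
      rewrite big_distrr; apply: eq_bigr => u hu; rewrite sub0r Qneg !Qnz //.
      by case: (QR u).
    have e2 : (\sum_u (QR u : nat) = \sum_(u | (u != 0)%R) (QR u : nat))%N.
      by rewrite (bigD1 0) //= QR0.
    rewrite e -e2 QRsum; lia.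
  rewrite ?(negbTE h1) Q0 sub0r Qneg mul1n.
  have -> : (\sum_(u2 : F) Q u2 * Q (u1 - u2)%R * Q (0 - u2)%R = M u1)%N.
    by apply: eq_bigr => u _; rewrite sub0r Qneg mulnAC.
  rewrite Qnz //; case hq: (QR u1); last by rewrite !muln0.
  rewrite M_val //=; lia.
case: (u1 =P 0) => [->|/eqP h1].
  rewrite (_ : (\sum_(u2 : F) (K3 u0 0%R u2 : nat) = 0)%N) ?muln0 ?add0n; last first.
    by apply: big1 => u2 _; rewrite /K3 QR0 andbF.
  rewrite subr0 Q0 muln1.
  have -> : (\sum_(u2 : F) Q u2 * Q (0 - u2)%R * Q (u0 - u2)%R = M u0)%N.
    by apply: eq_bigr => u _; rewrite sub0r Qneg.
  rewrite Qnz //; case hq: (QR u0); last by rewrite !muln0.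
  rewrite M_val //=; lia.
case: (u0 =P u1) => [<-|/eqP h01].
  rewrite (_ : (\sum_(u2 : F) (K3 u0 u0 u2 : nat) = 0)%N) ?muln0 ?add0n; last first.
    by apply: big1 => u2 _; rewrite /K3 subrr QR0 /= !andbF.
  rewrite subrr Q0 muln1.
  have -> : (\sum_(u2 : F) Q u2 * Q (u0 - u2)%R * Q (u0 - u2)%R = M u0)%N.
    rewrite /M (reindex_inj (inv_inj (subKr u0))) /=.
    apply: eq_bigr => u _.
    have e : u0 - (u0 - u) = u by ring.
    by rewrite e; ring.
  rewrite Qnz //; case hq: (QR u0); last by rewrite !muln0.
  rewrite M_val //=; lia.
have h01' : u0 - u1 != 0 by rewrite subr_eq0.
rewrite !Qnz //.
case: (boolP (QR u0 && QR u1 && QR (u0 - u1))) => htri; last first.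
  rewrite (_ : (\sum_(u2 : F) (K3 u0 u1 u2 : nat) = 0)%N); last first.
    apply: big1 => u2 _; case hK: (K3 u0 u1 u2) => //.
    by move: hK htri; rewrite /K3 => /and4P [-> -> _ /andP [-> _]].
  by move: htri; case: (QR u0); case: (QR u1); case: (QR (u0 - u1));
    rewrite //= ?muln0 ?mul0n.
move: (htri) => /andP [/andP [q0 q1] q01]; rewrite q0 q1 q01.
rewrite (bigD1 0) //= (bigD1 u0) //= (bigD1 u1) /=; last by rewrite h1 eq_sym h01.
rewrite [X in (_ = 64 * X + _)%N](bigD1 0) //= [X in (_ = 64 * (_ + X) + _)%N](bigD1 u0) //=.
rewrite [X in (_ = 64 * (_ + (_ + X)) + _)%N](bigD1 u1) /=; last by rewrite h1 eq_sym h01.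
rewrite /K3 QR0 subrr QR0 subrr QR0 /= !andbF /=.
rewrite Q0 !subr0 (QRQ q0) (QRQ q1) Qsub (QRQ q01) q0 q1 q01 /=.
rewrite (eq_bigr (fun i => 8 * ([&& QR i, QR (u0 - i)%R & QR (u1 - i)%R] : nat)))%N;
  last first.
  move=> i /andP [/andP [hi hi0] hi1].
  rewrite !Qnz // ?subr_eq0 1?eq_sym //.
  by case: (QR i); case: (QR (u0 - i)); case: (QR (u1 - i)).
rewrite -big_distrr /=.
lia.
Qed.



Lemma QRsum' : (\sum_(u | (u != 0)%R) (QR u : nat) = 2 * k)%N.
Proof. by rewrite -QRsum [in RHS](bigD1 0) //= QR0. Qed.

Lemma D_row0 : (\sum_(u1 : F) D 0%R u1 = 16 * k + 1 + 4 * (8 * k - 2) * (2 * k))%N.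
Proof.
rewrite (bigD1 0) //= /D eqxx.
rewrite (eq_bigr (fun u1 => 4 * (8 * k - 2) * QR u1)%N); last first.
  by move=> u1 /negbTE ->.
by rewrite -big_distrr /= QRsum'.
Qed.

Lemma D_row u0 : u0 != 0 ->
  (\sum_(u1 : F) D u0 u1 = QR u0 * (8 * (8 * k - 2) + 96 * (k - 1)))%N.
Proof.
move=> h0; rewrite (bigD1 0) //= (bigD1 u0) //= /D (negbTE h0) eqxx /=.
rewrite (eq_bigr (fun i => 96 * (QR u0 * (QR i && QR (i - u0)%R)))%N); last first.
  move=> i /andP [hi hi0]; rewrite (negbTE hi) eq_sym (negbTE hi0) QRsub.
  by case: (QR u0); rewrite /= ?mul1n ?mul0n.
rewrite -big_distrr -big_distrr /=.
have -> : (\sum_(i | (i != 0)%R && (i != u0)) (QR i && QR (i - u0)%R : nat) = c3 u0)%N.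
  by rewrite /c3 [in RHS](bigD1 0) //= [in RHS](bigD1 u0) //= QR0 subrr QR0 andbF.
case hq: (QR u0); last by rewrite !muln0.
rewrite c3_val //; lia.
Qed.

Lemma D_sum : (\sum_(u0 : F) \sum_(u1 : F) D u0 u1 = 384 * k * k - 224 * k + 1)%N.
Proof.
rewrite (bigD1 0) //= D_row0.
rewrite (eq_bigr (fun u0 => QR u0 * (8 * (8 * k - 2) + 96 * (k - 1))))%N; last first.
  by move=> u0 h0; rewrite D_row.
rewrite -big_distrl /= QRsum'.
have := k_gt0; nia.
Qed.

Definition Tsum : nat := (\sum_(u0 : F) \sum_(u1 : F) \sum_(u2 : F) (K3 u0 u1 u2 : nat))%N.

Lemma N3_val :
  (\sum_(u0 : F) \sum_(u1 : F) Q u0 * Q u1 * Q (u0 - u1)%R * L2 u0 u1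
    = 64 * Tsum + (384 * k * k - 224 * k + 1))%N.
Proof.
under eq_bigr => u0 _ do under eq_bigr => u1 _ do rewrite pre_L2.
under eq_bigr => u0 _ do rewrite big_split /=.
rewrite big_split /= -D_sum; congr (_ + _)%N.
rewrite /Tsum big_distrr /=; apply: eq_bigr => u0 _.
by rewrite big_distrr.
Qed.


Lemma sum_pair (I J : finType) (G : I * J -> nat) :
  (\sum_(a : I * J) G a = \sum_(i : I) \sum_(j : J) G (i, j))%N.
Proof. by rewrite pair_bigA; apply: eq_bigr => [[]]. Qed.

Lemma sqsub3 (G : F -> F -> F -> nat) :
  (\sum_(a : F) \sum_(b : F) \sum_(c : F) G (a * a)%R (b * b)%R (c * c)%R
   = \sum_(u : F) \sum_(v : F) \sum_(w : F) Q u * (Q v * (Q w * G u v w)))%N.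
Proof.
transitivity (\sum_(a : F) \sum_(b : F) \sum_(w : F) Q w * G (a * a)%R (b * b)%R w)%N.
  by apply: eq_bigr => a _; apply: eq_bigr => b _; rewrite sqsub.
transitivity (\sum_(a : F) \sum_(v : F) Q v * \sum_(w : F) Q w * G (a * a)%R v w)%N.
  by apply: eq_bigr => a _; rewrite (sqsub (fun v => \sum_(w : F) Q w * G (a * a)%R v w)%N).
rewrite (sqsub (fun u => \sum_(v : F) Q v * \sum_(w : F) Q w * G u v w)%N).
apply: eq_bigr => u _; rewrite big_distrr; apply: eq_bigr => v _ /=.
by rewrite !big_distrr /=; apply: eq_bigr => w _; rewrite mulnA.
Qed.

Definition mk6 (a : F * F * F * F * F * F) : {ffun 'I_6 -> F} :=
  [ffun i : 'I_6 => nth 0 [:: a.1.1.1.1.1; a.1.1.1.1.2; a.1.1.1.2; a.1.1.2; a.1.2; a.2] i].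

Definition un6 (x : {ffun 'I_6 -> F}) : F * F * F * F * F * F :=
  (x (inord 0), x (inord 1), x (inord 2), x (inord 3), x (inord 4), x (inord 5)).

Lemma mk6K : cancel mk6 un6.
Proof.
by case=> [[[[[a0 a1] a2] a3] a4] a5]; rewrite /un6 /mk6 !ffunE !inordK.
Qed.

Lemma un6K : cancel un6 mk6.
Proof.
move=> x; apply/ffunP => i; rewrite ffunE.
case: i => [[|[|[|[|[|[|m]]]]]] hi] //=; congr (x _); apply: val_inj; by rewrite /= inordK.
Qed.

Lemma Seq_mk6 a0 a1 a2 a3 a4 a5 :
  Seq (mk6 (a0, a1, a2, a3, a4, a5)) =
  [&& a1 ^+ 2 - a2 ^+ 2 == a3 ^+ 2, a0 ^+ 2 - a1 ^+ 2 == a4 ^+ 2 &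
      a0 ^+ 2 - a2 ^+ 2 == a5 ^+ 2].
Proof. by rewrite /Seq /mk6 !ffunE !inordK. Qed.

Lemma QE c : (\sum_(y : F) nat_of_bool (c == y ^+ 2)%R = Q c)%N.
Proof. by apply: eq_bigr => y _; rewrite eq_sym expr2. Qed.

Lemma card_Seq :
  (#|[set x : {ffun 'I_6 -> F} | Seq x]|
   = \sum_(u0 : F) \sum_(u1 : F) Q u0 * Q u1 * Q (u0 - u1)%R * L2 u0 u1)%N.
Proof.
rewrite -sum1_card big_mkcond /=.
rewrite (eq_bigr (fun x => nat_of_bool (Seq x))); last by move=> x _; rewrite inE; case: (Seq x).
rewrite (reindex mk6); last by exists un6 => x _; [exact: mk6K | exact: un6K].
rewrite !sum_pair.
transitivity (\sum_(a0 : F) \sum_(a1 : F) \sum_(a2 : F)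
    Q (a1 * a1 - a2 * a2)%R * (Q (a0 * a0 - a1 * a1)%R * Q (a0 * a0 - a2 * a2)%R))%N.
  apply: eq_bigr => a0 _; apply: eq_bigr => a1 _; apply: eq_bigr => a2 _.
  rewrite -!QE big_distrl /=; apply: eq_bigr => a3 _.
  rewrite big_distrl /= big_distrr /=; apply: eq_bigr => a4 _.
  rewrite big_distrr /= big_distrr /=; apply: eq_bigr => a5 _.
  by rewrite Seq_mk6 -!expr2 !mulnb.
rewrite (sqsub3 (fun u v w => Q (v - w)%R * (Q (u - v)%R * Q (u - w)%R))%N).
apply: eq_bigr => u0 _; apply: eq_bigr => u1 _.
rewrite /L2 big_distrr /=; apply: eq_bigr => u2 _.
ring.
Qed.


Lemma vscaleM (a b : F) x : vscale a (vscale b x) = vscale (a * b) x.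
Proof. by apply/ffunP => i; rewrite !ffunE mulrA. Qed.

Lemma vscale1 (x : {ffun 'I_6 -> F}) : vscale 1 x = x.
Proof. by apply/ffunP => i; rewrite !ffunE mul1r. Qed.

Lemma Seq_vscale (c : F) (x : {ffun 'I_6 -> F}) : c != 0 -> Seq (vscale c x) = Seq x.
Proof.
move=> hc; have hc2 : c ^+ 2 != 0 by rewrite expf_neq0.
by rewrite /Seq /vscale !ffunE !exprMn -!mulrBr !(inj_eq (mulfI hc2)).
Qed.

Lemma nz_ffun (x : {ffun 'I_6 -> F}) : x != [ffun => 0] -> exists i, x i != 0.
Proof.
move=> hx; apply/existsP; apply: contraR hx => /existsPn h.
by apply/eqP/ffunP => i; rewrite ffunE; apply/eqP; move: (h i); rewrite negbK.
Qed.

Lemma card_Spoints :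
  (#|Spoints p| * (p - 1) + 1 = #|[set x : {ffun 'I_6 -> F} | Seq x]|)%N.
Proof.
pose X := [set x : {ffun 'I_6 -> F} | (x != [ffun => 0]) && Seq x].
pose O := fun x : {ffun 'I_6 -> F} => [set vscale c x | c in [set c : F | c != 0]].
have -> : (#|Spoints p| * (p - 1) = #|X|)%N.
  apply: (@orbit_count _ X O).
  - move=> x; rewrite inE => /andP [hx hS]; apply/subsetP => y /imsetP [c].
    rewrite inE => hc ->; rewrite inE Seq_vscale // hS andbT.
    have [i hi] := nz_ffun hx; apply/eqP => /ffunP /(_ i).
    by rewrite !ffunE => /eqP; rewrite mulf_eq0 (negbTE hc) (negbTE hi).
  - move=> x; rewrite inE => /andP [hx _].
    have [i hi] := nz_ffun hx.
    rewrite card_in_imset; last first.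
      move=> a b _ _ /ffunP /(_ i); rewrite !ffunE; exact: (mulIf hi).
    rewrite cardsE cardC1 cardF; lia.
  - move=> x y _ /imsetP [c]; rewrite inE => hc ->.
    apply/setP => z; apply/imsetP/imsetP => [[d]|[d]]; rewrite inE => hd ->.
      by exists (d * c); rewrite ?vscaleM // inE mulf_neq0.
    exists (d / c); first by rewrite inE mulf_neq0 ?invr_eq0.
    by rewrite vscaleM mulfVK.
  - by move=> x _; apply/imsetP; exists 1; rewrite ?vscale1 // inE oner_eq0.
have -> : [set x : {ffun 'I_6 -> F} | Seq x] = [ffun => 0] |: X.
  apply/setP => x; rewrite !inE; case: (x =P [ffun => 0]) => [->|] //=.
  by rewrite /Seq !ffunE !expr2 !mul0r subr0 eqxx.
by rewrite cardsU1 inE eqxx /= addnC.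
Qed.


Definition tr (t : F) (A : {set F}) : {set F} := [set a + t | a in A].

Lemma tr_card (t : F) (A : {set F}) : #|tr t A| = #|A|.
Proof. by rewrite card_imset //; apply: addIr. Qed.

Lemma tr0 (A : {set F}) : tr 0 A = A.
Proof.
apply/setP => x; apply/imsetP/idP => [[a ha ->]|hx]; first by rewrite addr0.
by exists x; rewrite ?addr0.
Qed.

Lemma trD (s t : F) (A : {set F}) : tr s (tr t A) = tr (t + s) A.
Proof.
apply/setP => x; apply/imsetP/imsetP => [[b /imsetP [a ha ->] ->]|[a ha ->]].
  by exists a; rewrite // addrA.
by exists (a + t); [apply/imsetP; exists a | rewrite addrA].
Qed.

Lemma goodP (A : {set F}) (x y : F) : A \in goodK4 p -> x \in A -> y \in A -> x != y -> QR (x - y).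
Proof.
rewrite inE => /andP [_ /forallP h] hx hy hxy.
by move: (h x); rewrite hx /= => /forallP /(_ y); rewrite hy hxy /= nzqrE.
Qed.

Lemma good4 (A : {set F}) : A \in goodK4 p -> #|A| = 4%N.
Proof. by rewrite inE => /andP [/eqP -> _]. Qed.

Lemma goodI (A : {set F}) : #|A| = 4%N ->
  (forall x y, x \in A -> y \in A -> x != y -> QR (x - y)) -> A \in goodK4 p.
Proof.
move=> hc h; rewrite inE hc eqxx /=.
apply/forallP => x; apply/implyP => hx; apply/forallP => y; apply/implyP => hy.
by apply/implyP => hxy; rewrite nzqrE h.
Qed.

Lemma good_tr (t : F) (A : {set F}) : A \in goodK4 p -> tr t A \in goodK4 p.
Proof.
move=> hA; apply: goodI; first by rewrite tr_card good4.
move=> x y /imsetP [a ha ->] /imsetP [b hb ->].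
rewrite (inj_eq (addIr t)) => hab.
have -> : a + t - (b + t) = a - b by ring.
exact: goodP hA ha hb hab.
Qed.

Lemma good_trE (t : F) (A : {set F}) : (tr t A \in goodK4 p) = (A \in goodK4 p).
Proof.
apply/idP/idP => [h|]; last exact: good_tr.
by have := good_tr (- t) h; rewrite trD addrN tr0.
Qed.

Lemma tr_sum (t : F) (A : {set F}) : \sum_(b in tr t A) b = \sum_(a in A) a + t *+ #|A|.
Proof.
rewrite big_imset /=; last by move=> a b _ _; apply: addIr.
by rewrite big_split /= sumr_const.
Qed.

Lemma tr_inj_t (A : {set F}) (s t : F) : #|A| = 4%N -> tr t A = tr s A -> t = s.
Proof.
move=> hc h; have := congr1 (fun B : {set F} => \sum_(b in B) b) h => /=.
rewrite !tr_sum hc => /addrI /eqP; rewrite -subr_eq0 -mulrnBl -mulr_natr.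
by rewrite mulf_eq0 (negbTE four_neq0) orbF subr_eq0 => /eqP.
Qed.

Lemma card_good : #|goodK4 p| = (npK4 p * p)%N.
Proof.
rewrite /npK4; symmetry.
apply: (@orbit_count _ (goodK4 p) (fun A => [set tr t A | t : F])).
- move=> A hA; apply/subsetP => B /imsetP [t _ ->]; exact: good_tr.
- move=> A hA; rewrite card_imset; first by rewrite cardF.
  by move=> t s /(tr_inj_t (good4 hA)).
- move=> A B hA /imsetP [t _ ->]; apply/setP => Z.
  apply/imsetP/imsetP => [[s _ ->]|[s _ ->]].
    by exists (t + s); rewrite ?trD.
  by exists (s - t); rewrite // trD addrC subrK.
- by move=> A _; apply/imsetP; exists 0; rewrite ?tr0.
Qed.


Definition G0 : {set {set F}} := [set A in goodK4 p | 0 \in A].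

Lemma tr_inj (t : F) : injective (tr t).
Proof. by apply: (can_inj (g := tr (- t))) => A; rewrite trD addrN tr0. Qed.

Lemma mem_tr (t : F) (A : {set F}) : (t \in tr t A) = (0 \in A).
Proof.
apply/imsetP/idP => [[a ha /eqP]|h]; last by exists 0; rewrite ?add0r.
by rewrite -{1}(add0r t) (inj_eq (addIr t)) => /eqP ->.
Qed.

Lemma sum_ind (T : finType) (C : {pred T}) : (\sum_(u : T) (u \in C : nat) = #|C|)%N.
Proof. by rewrite -sum1_card [RHS]big_mkcond; apply: eq_bigr => u _; case: (u \in C). Qed.

Lemma card_good0 : (#|goodK4 p| * 4 = p * #|G0|)%N.
Proof.
have e1 : (\sum_(A in goodK4 p) #|A| = #|goodK4 p| * 4)%N.
  by rewrite -sum1_card big_distrl /=; apply: eq_bigr => A hA; rewrite good4 ?mul1n.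
rewrite -e1.
under eq_bigr => A _ do rewrite -sum_ind.
rewrite exchange_big /= -[X in (_ = X * _)%N]cardF -sum1_card big_distrl /=.
apply: eq_bigr => t _; rewrite mul1n.
rewrite (reindex_inj (@tr_inj t)) /=.
rewrite (eq_bigl (fun A => A \in goodK4 p)); last by move=> A; rewrite good_trE.
under eq_bigr => A _ do rewrite mem_tr.
rewrite -sum1_card big_mkcond [RHS]big_mkcond /=.
apply: eq_bigr => A _.
have -> : (A \in G0) = (A \in goodK4 p) && (0 \in A) by rewrite /G0 inE.
by case: (A \in goodK4 p); case: (0 \in A).
Qed.


Definition phi (u0 u1 u2 : F) : {set F} := [set x in [:: 0; u0; u1; u2]].

Lemma card_phi (u0 u1 u2 : F) :
  u0 != 0 -> u1 != 0 -> u2 != 0 -> u0 != u1 -> u0 != u2 -> u1 != u2 ->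
  #|phi u0 u1 u2| = 4%N.
Proof.
move=> h0 h1 h2 h01 h02 h12; rewrite /phi cardsE.
apply/card_uniqP; rewrite /= !inE !negb_or.
by rewrite ![0 == _]eq_sym h0 h1 h2 h01 h02 h12.
Qed.

Lemma K3_dist u0 u1 u2 : K3 u0 u1 u2 ->
  [/\ u0 != 0, u1 != 0, u2 != 0 & [/\ u0 != u1, u0 != u2 & u1 != u2]].
Proof.
case/andP => q0 /and5P [q1 q2 q01 q02 q12].
by split; rewrite ?QRnz //; split; rewrite -subr_eq0 QRnz.
Qed.

Lemma K3_phi u0 u1 u2 : K3 u0 u1 u2 -> phi u0 u1 u2 \in G0.
Proof.
move=> hK; have [h0 h1 h2 [h01 h02 h12]] := K3_dist hK.
case/andP: hK => q0 /and5P [q1 q2 q01 q02 q12].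
have q10 : QR (u1 - u0) by rewrite QRsub.
have q20 : QR (u2 - u0) by rewrite QRsub.
have q21 : QR (u2 - u1) by rewrite QRsub.
rewrite /G0 inE; apply/andP; split; last by rewrite /phi inE mem_head.
apply: goodI; first exact: card_phi.
move=> x y; rewrite /phi !inE.
case/or4P => /eqP -> ; case/or4P => /eqP ->; rewrite ?eqxx // => _;
  by rewrite ?subr0 ?sub0r ?QRneg.
Qed.

Lemma fibre (A : {set F}) u0 u1 u2 : A \in G0 ->
  (K3 u0 u1 u2 && (phi u0 u1 u2 == A)) =
  [&& u0 \in A :\ 0, u1 \in A :\ 0, u2 \in A :\ 0, u0 != u1, u0 != u2 & u1 != u2].
Proof.
rewrite /G0 inE => /andP [hA hA0].
apply/idP/idP.
  case/andP => hK /eqP <-; have [h0 h1 h2 [h01 h02 h12]] := K3_dist hK.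
  by rewrite !in_setD1 h0 h1 h2 h01 h02 h12 /phi !inE !eqxx !orbT.
case/andP => + /and5P [+ + h01 h02 h12]; rewrite !in_setD1 => /andP [h0 a0] /andP [h1 a1] /andP [h2 a2].
apply/andP; split.
  have g : forall x, x \in A -> x != 0 -> QR x.
    by move=> x hx hx0; have := goodP hA hx hA0 hx0; rewrite subr0.
  rewrite /K3 (g u0) // (g u1) // (g u2) //=; apply/and3P; split; by apply: (goodP hA).
rewrite eqEcard (good4 hA) card_phi // leqnn andbT.
apply/subsetP => x; rewrite /phi !inE.
by case/or4P => /eqP ->.
Qed.

Lemma count3 (B : {set F}) : #|B| = 3%N ->
  (\sum_(u0 : F) \sum_(u1 : F) \sum_(u2 : F)
    ([&& u0 \in B, u1 \in B, u2 \in B, u0 != u1, u0 != u2 & u1 != u2] : nat) = 6)%N.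
Proof.
move=> hB.
rewrite (eq_bigr (fun u0 => (u0 \in B) * 2)%N).
  by rewrite -big_distrl /= sum_ind hB.
move=> u0 _; case h0: (u0 \in B) => /=; last by rewrite big1 // => u1 _; rewrite big1.
rewrite (eq_bigr (fun u1 => (u1 \in B :\ u0 : nat))).
  rewrite sum_ind mul1n; have := cardsD1 u0 B; rewrite h0 hB; lia.
move=> u1 _; rewrite in_setD1.
case h1: (u1 \in B); last by rewrite andbF big1 // => u2 _; rewrite andbF.
rewrite andbT [u1 == u0]eq_sym.
case h01: (u0 != u1) => /=; last by rewrite big1 // => u2 _; rewrite !andbF.
rewrite (eq_bigr (fun u2 => (u2 \in (B :\ u0) :\ u1 : nat))).
  rewrite sum_ind.
  have := cardsD1 u0 B; have := cardsD1 u1 (B :\ u0).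
  rewrite in_setD1 h1 h0 hB eq_sym h01 /=; lia.
move=> u2 _; rewrite !in_setD1.
case: (u2 \in B); rewrite ?andbF //= andbT.
by rewrite ![u2 == _]eq_sym; case: (u0 == u2); case: (u1 == u2).
Qed.


Lemma Tsum_G0 : Tsum = (6 * #|G0|)%N.
Proof.
have e : forall u0 u1 u2, (K3 u0 u1 u2 : nat) =
    (\sum_(A in G0) (K3 u0 u1 u2 && (phi u0 u1 u2 == A) : nat))%N.
  move=> u0 u1 u2; case hK: (K3 u0 u1 u2) => /=; last by rewrite big1.
  rewrite (bigD1 (phi u0 u1 u2)) ?K3_phi //= eqxx big1 // => A /andP [_ hA].
  by rewrite eq_sym (negbTE hA).
rewrite /Tsum.
under eq_bigr => u0 _ do under eq_bigr => u1 _ do under eq_bigr => u2 _ do rewrite e.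
under eq_bigr => u0 _ do under eq_bigr => u1 _ do rewrite exchange_big.
under eq_bigr => u0 _ do rewrite exchange_big.
rewrite exchange_big /= mulnC -sum1_card big_distrl /=.
apply: eq_bigr => A hA; rewrite mul1n.
under eq_bigr => u0 _ do under eq_bigr => u1 _ do under eq_bigr => u2 _ do rewrite fibre //.
apply: count3.
move: hA; rewrite /G0 inE => /andP [hA hA0].
have := cardsD1 0 A; rewrite hA0 (good4 hA) add1n => /eqP; rewrite eqSS => /eqP h; exact: (esym h).
Qed.

Lemma Tsum_n : Tsum = (24 * npK4 p)%N.
Proof.
have h1 := card_good; have h2 := card_good0.
rewrite h1 in h2; rewrite Tsum_G0.
have hp0 : (0 < p)%N by rewrite hpk addn1.
have : (#|G0| = 4 * npK4 p)%N.
  apply/eqP; rewrite -(eqn_pmul2l hp0); apply/eqP; rewrite -h2; lia.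
lia.
Qed.

Lemma key : (#|Spoints p| * (4 * k) = 1536 * npK4 p + 384 * k * k - 224 * k)%N.
Proof.
have h := card_Spoints; rewrite card_Seq N3_val Tsum_n in h.
have e : (p - 1 = 4 * k)%N by rewrite hpk; lia.
rewrite e in h; have := k_gt0; nia.
Qed.

End Main.

Unset Implicit Arguments.
Set Strict Implicit.

Lemma final_alg (R : fieldType) (S N K J : R) :
  (24 : R) != 0 -> (32 : R) != 0 -> (1536 : R) != 0 -> 4 * K != 0 ->
  S * (4 * K) + 224 * K = 1536 * N + 384 * K * K ->
  (N = (K * (K - 1) * (K - 4) + 2 * K * ((J ^+ 2 - 4) / 32)) / 24 <->
   S = (4 * K + 1 + 1) ^+ 2 + J ^+ 2).
Proof.
move=> h24 h32 h1536 h4 hq.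
have hS : S * (4 * K) = 1536 * N + 384 * K * K - 224 * K by rewrite -hq addrK.
have hN : N = (S * (4 * K) + 224 * K - 384 * K * K) / 1536.
  by rewrite hq; field.
split => h.
  by apply: (mulIf h4); rewrite hS h; field; rewrite h24 h32.
by rewrite hN h; field; rewrite ?h1536 ?h24 ?h32.
Qed.

Theorem lemma4p2 (k : nat) (hp : prime (4 * k + 1)) :
  ((npK4 (4 * k + 1))%:R
     = (k%:R * (k%:R - 1) * (k%:R - 4) + 2 * k%:R * dk k) / 24 :> rat)
  <-> ((#|Spoints (4 * k + 1)|)%:Z = ((4 * k + 1)%:Z + 1) ^+ 2 + (Jk k) ^+ 2).
Proof.
have hk := @key (4 * k + 1) k hp erefl.
have k0 := @k_gt0 (4 * k + 1) k hp erefl.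
rewrite /dk.
move: hk; generalize #|Spoints (4 * k + 1)| (npK4 (4 * k + 1)) (Jk k) => S n J hk.
have hk' : (S * (4 * k) + 224 * k = 1536 * n + 384 * k * k)%N by rewrite hk; nia.
have hq : (S%:R * (4 * k%:R) + 224 * k%:R = 1536 * n%:R + 384 * k%:R * k%:R :> rat).
  have := congr1 (GRing.natmul (1 : rat)) hk'.
  by rewrite (natrD _ (S * (4 * k))) (natrD _ (1536 * n)) !natrM.
have hK : (k%:R : rat) != 0 by rewrite pnatr_eq0 -lt0n.
have h40 : (4 : rat) != 0 by rewrite pnatr_eq0.
have h4 : (4 * k%:R : rat) != 0 by rewrite mulf_neq0.
have h24 : (24 : rat) != 0 by rewrite pnatr_eq0.
have h32 : (32 : rat) != 0 by rewrite pnatr_eq0.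
have h1536 : (1536 : rat) != 0 by rewrite pnatr_eq0.
rewrite (@final_alg rat _ _ _ J%:~R h24 h32 h1536 h4 hq).

have e1 : (S%:Z)%:~R = (S%:R : rat) by [].
have e2 : (((4 * k + 1)%N%:Z)%:~R) = (4 * k%:R + 1 : rat).
  by rewrite -[LHS]/((4 * k + 1)%:R : rat) natrD natrM.
split => h.
  apply/eqP; rewrite -(eqr_int rat); apply/eqP.
  by rewrite rmorphD /= !rmorphXn /= rmorphD /= e1 e2 h.
move: h => /(congr1 (fun z : int => (z%:~R : rat))).
by rewrite rmorphD /= !rmorphXn /= rmorphD /= e1 e2.
Qed.
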